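(* Assume $F=f+h$ attains its minimum at some $x^*$, let $F^*=F(x^* )$, and consider the Regularized Composite Tensor Method $x_0\in\operatorname{dom}h$, $x_{k+1}=T_H(x_k)$, $k\ge0$, with $H=pL_p$. Assume $D=\sup_{x\in\operatorname{dom}h}\{\|x-x^*\|:F(x)\le F(x_0)\}<+\infty$. Then $$F(x_k)-F^*\le\frac{(p+1)(2p)^p}{p!}\cdot\frac{L_pD^{p+1}}{(k-1)^p},\qquad k\ge2.$$
   Context: $\mathbb{E}$ is a finite-dimensional real vector space with dual $\mathbb{E}^*$; $B:\mathbb{E}\to\mathbb{E}^*$ is a fixed self-adjoint positive-definite operator, $\|x\|=\langle Bx,x\rangle^{1/2}$, $\|g\|_*=\langle g,B^{-1}g\rangle^{1/2}$. Let $p\ge 2$ be an integer, $h:\mathbb{E}\to\mathbb{R}\cup\{+\infty\}$ proper closed convex, and $f$ convex and $p$ times differentiable on an open convex set containing $\operatorname{dom}h$, with $\|D^pf(x)-D^pf(y)\|\le L_p\|x-y\|$ for $x,y\in\operatorname{dom}h$, $0<L_p<\infty$, where for a symmetric $p$-linear form $\|A\|=\max_{\|u\|\le1}|A[u]^p|$. $F=f+h$. Taylor polynomial $\Omega_p(f,x;y)=f(x)+\sum_{k=1}^p\frac1{k!}D^kf(x)[y-x]^k$. For $x\in\operatorname{dom}h$, $T_H(x)=\arg\min_{y\in\mathbb{E}}\{\Omega_p(f,x;y)+\frac{H}{(p+1)!}\|y-x\|^{p+1}+h(y)\}$. *)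

(* Defs.v *)
From HB Require Import structures.
From mathcomp Require Import all_boot all_order all_algebra.
From mathcomp Require Import all_classical all_reals all_analysis.
Set Implicit Arguments. Unset Strict Implicit. Unset Printing Implicit Defensive.
Import Order.TTheory GRing.Theory Num.Theory.
Import numFieldNormedType.Exports.
Local Open Scope classical_set_scope.
Local Open Scope ring_scope.

Section Defs.
Variables (R : realType) (n : nat).
Notation E := 'rV[R]_n.

Definition Bnorm (B : 'M[R]_n) (x : E) : R := Num.sqrt ((x *m B *m x^T) 0 0).

Definition selfadj_posdef (B : 'M[R]_n) : Prop :=
  B^T = B /\ forall x : E, x != 0 -> 0 < (x *m B *m x^T) 0 0.

Definition convex_on (U : set E) (f : E -> R) : Prop :=
  forall x y : E, U x -> U y -> forall t : R, 0 <= t <= 1 ->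
    f (t *: x + (1 - t) *: y) <= t * f x + (1 - t) * f y.

Definition dom (h : E -> \bar R) : set E := [set x | (h x < +oo)%E].

Definition proper_closed_convex (h : E -> \bar R) : Prop :=
  (forall x, h x != -oo%E) /\ (exists x, dom h x) /\
  (forall t : R, closed [set x | (h x <= t%:E)%E]) /\
  (forall x y : E, forall t : R, 0 <= t <= 1 ->
     (h (t *: x + (1 - t) *: y)%R <= t%:E * h x + (1 - t)%:E * h y)%E).

(* Derivative tensors: T k x s is the partial derivative
   d^k f / dx_{s_1} ... dx_{s_k} (x), for s a list of k coordinate indices.
   [deriv_family p U f T] says that f is p times (Frechet) differentiable on U,
   with T k the k-th derivative (in coordinates). *)
Definition deriv_family (p : nat) (U : set E) (f : E -> R)
    (T : nat -> E -> seq 'I_n -> R) : Prop :=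
  (forall x, T 0%N x [::] = f x) /\
  (forall k, (k < p)%N -> forall x, U x -> forall s : seq 'I_n, size s = k ->
     differentiable (fun y => T k y s) x /\
     forall i : 'I_n, 'd (fun y => T k y s) x (delta_mx 0 i) = T k.+1 x (rcons s i)).

Definition Dpow (T : nat -> E -> seq 'I_n -> R) (k : nat) (x u : E) : R :=
  \sum_(s : k.-tuple 'I_n) T k x (tval s) * \prod_(j <- tval s) u 0 j.

Definition Omega (f : E -> R) (T : nat -> E -> seq 'I_n -> R) (p : nat) (x y : E) : R :=
  f x + \sum_(1 <= k < p.+1) (k`!%:R)^-1 * Dpow T k x (y - x).

Definition is_TH (B : 'M[R]_n) (f : E -> R) (h : E -> \bar R)
    (T : nat -> E -> seq 'I_n -> R) (p : nat) (H : R) (x y : E) : Prop :=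
  forall z : E,
    ((Omega f T p x y + H / (p.+1)`!%:R * Bnorm B (y - x) ^+ p.+1)%:E + h y
     <= (Omega f T p x z + H / (p.+1)`!%:R * Bnorm B (z - x) ^+ p.+1)%:E + h z)%E.

End Defs.

(* Main.v *)
Require Import Defs.
From HB Require Import structures.
From mathcomp Require Import all_boot all_order all_algebra.
From mathcomp Require Import all_classical all_reals all_analysis.
From mathcomp Require Import ring lra zify.
Import Order.TTheory GRing.Theory Num.Theory.
Import numFieldNormedType.Exports.
Local Open Scope classical_set_scope.
Local Open Scope ring_scope.

Section Gen.
Context (R : realType).

Lemma is_derive_ext (f g : R -> R) (t df : R) :
  (forall s, f s = g s) -> is_derive t 1 f df -> is_derive t 1 g df.
Proof. by move=> fg; have -> : f = g by apply/funext. Qed.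

Lemma is_derive_monom (c : R) (n : nat) (t : R) :
  is_derive t 1 (fun s : R => c * s ^+ n) (c * (n%:R * t ^+ n.-1)).
Proof.
have H := is_deriveZ c (is_deriveX n (is_derive_id t (1:R))).
apply: is_derive_eq.
  by apply: is_derive_ext H => s /=; rewrite exprfctE.
by rewrite [_%:A]mulr1.
Qed.

Lemma mono_bound (g dg : R -> R) (M : R) (q : nat) :
  g 0 = 0 -> (forall t : R, 0 <= t <= 1 -> is_derive t 1 g (dg t)) ->
  (forall t : R, 0 <= t <= 1 -> `|dg t| <= M * (t ^+ q / q`!%:R)) ->
  forall t : R, 0 <= t <= 1 -> `|g t| <= M * (t ^+ q.+1 / q.+1`!%:R).
Proof.
move=> g0 dgt dgb.
suff key : forall (e : R), e = 1 \/ e = -1 ->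
  forall t : R, 0 <= t <= 1 -> e * g t <= M * (t ^+ q.+1 / q.+1`!%:R).
  move=> t t01; rewrite ler_norml; apply/andP; split.
    by rewrite lerNl -mulN1r; apply: key => //; right.
  by rewrite -[g t]mul1r; apply: key => //; left.
move=> e he t t01.
pose c := M / q.+1`!%:R.
pose psi := fun s : R => e * g s - c * s ^+ q.+1.
have dpsi : forall s : R, 0 <= s <= 1 ->
    is_derive s 1 psi (e * dg s - c * (q.+1%:R * s ^+ q)).
  move=> s s01.
  have H1 := is_deriveZ e (dgt s s01).
  have H2 := is_deriveN (is_derive_monom c q.+1 s).
  have H3 := is_deriveD H1 H2.
  by apply: is_derive_ext H3 => r.
have cont : {within `[0, 1], continuous psi}.
  apply: derivable_within_continuous => s; rewrite in_itv /= => s01.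
  by have := dpsi s s01; case.
have : psi t <= psi 0.
  apply: (@ler0_derive1_le_cc _ psi 0 1) => //.
  - move=> s; rewrite in_itv /= => /andP[s0 s1].
    have s01 : 0 <= s <= 1 by rewrite !ltW.
    by have := dpsi s s01; case.
  - move=> s; rewrite in_itv /= => /andP[s0 s1].
    have s01 : 0 <= s <= 1 by rewrite !ltW.
    rewrite derive1E; have [_ ->] := dpsi s s01.
    rewrite subr_le0.
    have -> : c * (q.+1%:R * s ^+ q) = M * (s ^+ q / q`!%:R).
      rewrite /c factS natrM; field.
      by rewrite pnatr_eq0 -lt0n fact_gt0 /= addrC natr1 pnatr_eq0.
    apply: le_trans (dgb s s01).
    by case: he => ->; rewrite ?mul1r ?mulN1r ?ler_norm ?ler_normr ?lexx ?orbT.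
  - by rewrite in_itv /= lexx ler01.
  - by case/andP: t01.
rewrite /psi g0 mulr0 expr0n /= mulr0 subrr subr_le0.
by rewrite /c mulrAC -mulrA.
Qed.

Lemma is_derive_bsum (I : Type) (r : seq I) (F : I -> R -> R) (dF : I -> R) (t : R) :
  (forall i, is_derive t 1 (F i) (dF i)) ->
  is_derive t 1 (fun s => \sum_(i <- r) F i s) (\sum_(i <- r) dF i).
Proof.
move=> H; elim: r => [|a r IH].
  rewrite big_nil; apply: is_derive_ext (is_derive_cst (0:R) t 1) => s.
  by rewrite big_nil.
rewrite big_cons; apply: is_derive_ext (is_deriveD (H a) IH) => s /=.
by rewrite big_cons.
Qed.

Lemma taylor_gen (q : nat) : forall (phi : nat -> R -> R) (M : R),
  (forall k, (k < q)%N -> forall t : R, 0 <= t <= 1 ->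
     is_derive t 1 (phi k) (phi k.+1 t)) ->
  (forall t : R, 0 <= t <= 1 -> `|phi q t - phi q 0| <= M * t) ->
  forall t : R, 0 <= t <= 1 ->
  `|phi 0%N t - \sum_(k < q.+1) phi k 0 * (t ^+ k / k`!%:R)|
     <= M * (t ^+ q.+1 / q.+1`!%:R).
Proof.
elim: q => [|q IH] phi M Hd Hl t t01.
  by rewrite big_ord1 /= expr0 divr1 mulr1 expr1 divr1; apply: Hl.
pose g1 := fun s : R => phi 1%N s - \sum_(k < q.+1) phi k.+1 0 * (s ^+ k / k`!%:R).
have Hg1 : forall s : R, 0 <= s <= 1 -> `|g1 s| <= M * (s ^+ q.+1 / q.+1`!%:R).
  apply: (IH (fun k => phi k.+1)) => //.
  by move=> k kq s s01; apply: Hd.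
apply: (@mono_bound (fun s => phi 0%N s - \sum_(k < q.+2) phi k 0 * (s ^+ k / k`!%:R)) g1) => //.
- rewrite big_ord_recl /= expr0 divr1 mulr1 big1 ?addr0 ?subrr // => i _.
  by rewrite expr0n /= mul0r mulr0.
- move=> s s01.
  have H0 := Hd 0%N isT s s01.
  have HS : forall i : 'I_q.+1, is_derive s 1
      (fun r => phi (bump 0 i) 0 * (r ^+ (bump 0 i) / (bump 0 i)`!%:R))
      (phi i.+1 0 * (s ^+ i / i`!%:R)).
    move=> i; apply: is_derive_eq.
      apply: is_derive_ext (is_derive_monom (phi i.+1 0 / i.+1`!%:R) i.+1 s) => r.
      by rewrite /bump leq0n add1n mulrA mulrAC.
    rewrite /= factS natrM; field.
    by rewrite pnatr_eq0 -lt0n fact_gt0 /= addrC natr1 pnatr_eq0.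
  have HB := @is_derive_bsum _ (index_enum 'I_q.+1) _ _ s HS.
  have HC := is_derive_cst (phi 0%N 0 * (1 / 0`!%:R)) s 1.
  have := is_deriveB H0 (is_deriveD HC HB).
  rewrite add0r => H1.
  apply: is_derive_ext H1 => r /=.
  by rewrite big_ord_recl /= expr0.
Qed.

Lemma powle (a b : R) (n : nat) : 0 <= a -> a <= b -> a ^+ n <= b ^+ n.
Proof. by move=> a0 ab; apply: lerXn2r => //; rewrite nnegrE // (le_trans a0 ab). Qed.

Lemma pow_diff (a : R) (p : nat) : 0 <= a ->
  ((a + 1) ^+ p - a ^+ p) * (a + 1) <= p%:R * (a + 1) ^+ p.
Proof.
move=> a0; elim: p => [|p IH]; first by rewrite !expr0 subrr mul0r mul0r.
have PQ : a ^+ p <= (a + 1) ^+ p by apply: powle => //; lra.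
have P0 : 0 <= a ^+ p by apply: exprn_ge0.
rewrite !exprS -natr1.
nra.
Qed.

Lemma step_ineq (p : nat) (a : R) : (1 <= p)%N -> 2 * p%:R <= a ->
  (1 - 2 * p%:R / a) * (p.+1%:R * (2 * p%:R) ^+ p / a ^+ p)
    + (2 * p%:R / a) ^+ p.+1
  <= p.+1%:R * (2 * p%:R) ^+ p / (a + 1) ^+ p.
Proof.
move=> p1 pa.
have p1r : 1 <= p%:R :> R by rewrite ler1n.
have a0 : 0 < a by lra.
set K := (2 * p%:R) ^+ p.
have K0 : 0 <= K by apply: exprn_ge0; lra.
set P := a ^+ p; set Q := (a + 1) ^+ p.
have P0 : 0 < P by apply: exprn_gt0.
have PQ : P <= Q by apply: powle; lra.
have Q0 : 0 < Q by lra.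
have hd := @pow_diff a p (ltW a0). rewrite -/P -/Q in hd.
have h1 : a * (Q - P) <= p%:R * Q by nra.
rewrite expr_div_n exprS -/K exprS -/P.
have -> : (1 - 2 * p%:R / a) * (p.+1%:R * K / P) + 2 * p%:R * K / (a * P)
   = ((a - 2 * p%:R) * p.+1%:R * K * Q + 2 * p%:R * K * Q) / (a * P * Q).
  by field; rewrite !gt_eqF.
have -> : p.+1%:R * K / Q = (p.+1%:R * K * a * P) / (a * P * Q).
  by field; rewrite !gt_eqF.
rewrite ler_pM2r; last by rewrite invr_gt0 !mulr_gt0.
rewrite -natr1.
have h2 : (p%:R + 1) * K * (a * (Q - P)) <= (p%:R + 1) * K * (p%:R * Q).
  by apply: ler_wpM2l => //; apply: mulr_ge0 => //; lra.
have h3 : 0 <= (p%:R - 1) * p%:R * K * Q.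
  by apply: mulr_ge0; [apply: mulr_ge0; [apply: mulr_ge0|] |]; lra.
nra.
Qed.

Lemma seq_rate (p : nat) (C : R) (d : nat -> R) : (1 <= p)%N -> 0 <= C ->
  (forall k (t : R), 0 <= t <= 1 -> d k.+1 <= (1 - t) * d k + C * t ^+ p.+1) ->
  forall m, (1 <= m)%N ->
  d m.+1 <= p.+1%:R * (2 * p%:R) ^+ p / m%:R ^+ p * C.
Proof.
move=> p1 C0 rec.
have mono k : d k.+1 <= d k.
  have := rec k 0; rewrite subr0 mul1r expr0n /= mulr0 addr0; apply.
  by rewrite lexx ler01.
have d1 : d 1%N <= C.
  have := rec 0%N 1; rewrite subrr mul0r add0r expr1n mulr1; apply.
  by rewrite lexx ler01.
have dC k : d k.+1 <= C.
  by elim: k => // k IH; apply: le_trans (mono _) IH.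
have p1r : 1 <= p%:R :> R by rewrite ler1n.
elim=> // m IH _.
case: (leqP m.+1 (2 * p)) => hm.
  apply: le_trans (dC _) _.
  have m0 : 0 < m.+1%:R :> R by rewrite ltr0n.
  rewrite -[X in X <= _]mul1r ler_wpM2r // ler_pdivlMr ?exprn_gt0 // mul1r.
  have : m.+1%:R ^+ p <= (2 * p%:R) ^+ p :> R.
    by apply: powle; [apply: ltW| rewrite -natrM ler_nat].
  have K0 : 0 <= (2 * p%:R) ^+ p :> R by apply: exprn_ge0; lra.
  rewrite -natr1. nra.
have m1 : (1 <= m)%N by lia.
have IHm := IH m1.
have pa : 2 * p%:R <= m%:R :> R by rewrite -natrM ler_nat -ltnS.
have a0 : 0 < m%:R :> R by rewrite ltr0n.
pose t : R := 2 * p%:R / m%:R.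
have t01 : 0 <= t <= 1.
  rewrite /t divr_ge0 ?ler_pdivrMr //=; try lra.
apply: le_trans (rec m.+1 t t01) _.
have h1t : 0 <= 1 - t by case/andP: t01 => _; lra.
apply: le_trans (_ : (1 - t) * (p.+1%:R * (2 * p%:R) ^+ p / m%:R ^+ p * C) + C * t ^+ p.+1 <= _).
  by rewrite lerD2r; apply: ler_wpM2l.
have := @step_ineq p m%:R p1 pa; rewrite -/t -natr1 => H.
have := ler_wpM2r C0 H. rewrite -natr1.
set X := (1 - t); set Y := (p%:R + 1) * (2 * p%:R) ^+ p.
move=> H2.
suff -> : X * (Y / m%:R ^+ p * C) + C * t ^+ p.+1 = (X * (Y / m%:R ^+ p) + t ^+ p.+1) * C.
  by rewrite -natr1.
by rewrite /X /Y; ring.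
Qed.
End Gen.

Section Vec.
Context (R : realType) (n : nat).
Notation E := 'rV[R]_n.
Context (B : 'M[R]_n) (HB : selfadj_posdef B).

Definition qf (x : E) : R := (x *m B *m x^T) 0 0.

Lemma qfZ (c : R) (x : E) : qf (c *: x) = c ^+ 2 * qf x.
Proof.
rewrite /qf.
have -> : (c *: x)^T = c *: x^T by apply/matrixP => i j; rewrite !mxE.
by rewrite -scalemxAl -scalemxAr -scalemxAl !mxE mulrA expr2.
Qed.

Lemma qf_ge0 (x : E) : 0 <= qf x.
Proof.
case: (eqVneq x 0) => [->|xn0].
  by rewrite /qf !mul0mx mxE.
by apply: ltW; case: HB => _; apply.
Qed.

Lemma Bnorm_ge0 (x : E) : 0 <= Bnorm B x.
Proof. exact: sqrtr_ge0. Qed.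

Lemma BnormZ (c : R) (x : E) : Bnorm B (c *: x) = `|c| * Bnorm B x.
Proof.
rewrite /Bnorm -/(qf _) -/(qf x) qfZ sqrtrM ?sqrtr_sqr //.
exact: sqr_ge0.
Qed.

Lemma Bnorm_eq0 (x : E) : Bnorm B x = 0 -> x = 0.
Proof.
move=> h; apply/eqP; apply/negPn/negP => xn0.
case: HB => _ /(_ x xn0); rewrite -/(qf x) => q0.
by move: h; rewrite /Bnorm -/(qf x) => /eqP; rewrite sqrtr_eq0 leNgt q0.
Qed.


Lemma prod_scale (c : R) (u : E) (s : seq 'I_n) :
  \prod_(j <- s) (c *: u) 0 j = c ^+ size s * \prod_(j <- s) u 0 j.
Proof.
elim: s => [|a s IH]; first by rewrite !big_nil expr0 mul1r.
by rewrite !big_cons IH mxE /= exprS; ring.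
Qed.

Lemma DpowZ (T : nat -> E -> seq 'I_n -> R) k z (c : R) (u : E) :
  Dpow T k z (c *: u) = c ^+ k * Dpow T k z u.
Proof.
rewrite /Dpow mulr_sumr; apply: eq_bigr => s _.
by rewrite prod_scale size_tuple; ring.
Qed.

Lemma Dpow_u0 (T : nat -> E -> seq 'I_n -> R) k z :
  (0 < k)%N -> Dpow T k z 0 = 0.
Proof.
move=> k0; have := DpowZ T k z 0 0; rewrite scale0r => ->.
by case: k k0 => // k _; rewrite expr0n mul0r.
Qed.

Lemma Dpow_0 (T : nat -> E -> seq 'I_n -> R) z u : Dpow T 0 z u = T 0%N z [::].
Proof.
rewrite /Dpow (big_pred1 [tuple]) => [|s]; first by rewrite big_nil mulr1.
by rewrite [s]tuple0 /= eqxx.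
Qed.

Definition split_last k (t : k.+1.-tuple 'I_n) : k.-tuple 'I_n * 'I_n :=
  (belast_tuple (thead t) (behead_tuple t), last (thead t) (behead t)).

Definition join_last k (pi : k.-tuple 'I_n * 'I_n) : k.+1.-tuple 'I_n :=
  rcons_tuple pi.1 pi.2.

Lemma sum_rcons k (G : seq 'I_n -> R) :
  \sum_(s : k.+1.-tuple 'I_n) G s = \sum_(s : k.-tuple 'I_n) \sum_(i < n) G (rcons s i).
Proof.
rewrite (reindex (@join_last k)) /=; last first.
  exists (@split_last k) => [[s i] _|t _].
    rewrite /split_last /join_last /=.
    case: s => [[|a s] hs]; rewrite /thead (tnth_nth i) /=.
      by congr pair; apply: val_inj.
    by congr pair; [apply: val_inj; rewrite /= belast_rcons | rewrite last_rcons].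
  apply: val_inj; rewrite /join_last /split_last /= -lastI.
  by case: t => [[|a s] hs] //.
by rewrite pair_bigA.
Qed.


Lemma chain_line (g : E -> R) (x u : E) (t : R) :
  differentiable g (x + t *: u) ->
  is_derive t 1 (fun s : R => g (x + s *: u)) ('d g (x + t *: u) u).
Proof.
move=> dg.
have EQ : (fun h : R => h^-1 *: (((fun s : R => g (x + s *: u)) \o shift t) (h *: 1)
             - g (x + t *: u)))
        = (fun h : R => h^-1 *: ((g \o shift (x + t *: u)) (h *: u) - g (x + t *: u))).
  apply/funext => h /=.
  by rewrite [h *: 1]mulr1 scalerDl addrCA addrA [x + _]addrC.
apply: DeriveDef.
  by rewrite /derivable EQ; apply: diff_derivable.
by rewrite /derive EQ -/(derive _ _ _) deriveE.
Qed.

Lemma d_comb (g : E -> R) (z u : E) :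
  'd g z u = \sum_(i < n) u 0 i * 'd g z (delta_mx 0 i).
Proof.
rewrite {1}(row_sum_delta u) linear_sum; apply: eq_bigr => i _.
by rewrite linearZ.
Qed.


Lemma Dpow_derive (p : nat) (U : set E) (f : E -> R) (T : nat -> E -> seq 'I_n -> R)
    k (x u : E) (t : R) :
  deriv_family p U f T -> (k < p)%N -> U (x + t *: u) ->
  is_derive t 1 (fun r : R => Dpow T k (x + r *: u) u) (Dpow T k.+1 (x + t *: u) u).
Proof.
move=> [_ Hd] kp Uz.
set z := x + t *: u.
have HS : forall s : k.-tuple 'I_n, is_derive t 1
    (fun r : R => T k (x + r *: u) s * \prod_(j <- s) u 0 j)
    ((\prod_(j <- s) u 0 j) * 'd (fun y => T k y s) z u).
  move=> s.
  have [dif _] := Hd k kp z Uz s (size_tuple s).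
  have := is_deriveZ (\prod_(j <- s) u 0 j) (@chain_line _ x u t dif).
  by apply: is_derive_ext => r /=; rewrite mulrC.
have := @is_derive_bsum R _ (index_enum (k.-tuple 'I_n)) _ _ t HS.
rewrite /Dpow => H; apply: is_derive_eq H _.
apply: esym; etransitivity; first exact: (@sum_rcons k (fun s => T k.+1 z s * \prod_(j <- s) u 0 j)).
apply: eq_bigr => s _.
rewrite d_comb mulr_sumr; apply: eq_bigr => i _.
have [_ ->] := Hd k kp z Uz s (size_tuple s).
by rewrite big_rcons /=; ring.
Qed.

End Vec.

Section Tay.
Context (R : realType) (n : nat).
Notation E := 'rV[R]_n.

Lemma taylor_f (p : nat) (U : set E) (f : E -> R) (T : nat -> E -> seq 'I_n -> R)
    (x y : E) (M : R) :
  deriv_family p U f T ->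
  (forall t : R, 0 <= t <= 1 -> U (x + t *: (y - x))) ->
  (forall t : R, 0 <= t <= 1 ->
     `|Dpow T p (x + t *: (y - x)) (y - x) - Dpow T p x (y - x)| <= M * t) ->
  `|f y - Omega f T p x y| <= M / p.+1`!%:R.
Proof.
move=> Hf HU HL.
pose phi := fun k (t : R) => Dpow T k (x + t *: (y - x)) (y - x).
have Hphi0 k : phi k 0 = Dpow T k x (y - x) by rewrite /phi scale0r addr0.
have H1 : forall k, (k < p)%N -> forall t : R, 0 <= t <= 1 ->
    is_derive t 1 (phi k) (phi k.+1 t).
  by move=> k kp t t01; exact: (@Dpow_derive R n p U f T k x (y - x) t Hf kp (HU t t01)).
have H2 : forall t : R, 0 <= t <= 1 -> `|phi p t - phi p 0| <= M * t.
  by move=> t t01; rewrite Hphi0; apply: HL.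
have := @taylor_gen R p phi M H1 H2 1; rewrite lexx ler01 => /(_ isT).
rewrite expr1n mul1r.
have -> : phi 0%N 1 = f y.
  by rewrite /phi Dpow_0 scale1r addrC subrK; case: Hf => ->.
have -> : \sum_(k < p.+1) phi k 0 * (1 ^+ k / k`!%:R) = Omega f T p x y.
  rewrite big_ord_recl /= Hphi0 Dpow_0 expr0 divr1 mulr1.
  case: Hf => -> _; rewrite /Omega; congr (_ + _).
  rewrite big_add1 /= big_mkord; apply: eq_bigr => i _.
  by rewrite Hphi0 expr1n mul1r mulrC.
by [].
Qed.

End Tay.

Section Lip.
Context (R : realType) (n : nat).
Notation E := 'rV[R]_n.

Lemma seg_eq (x y : E) (t : R) : x + t *: (y - x) = t *: y + (1 - t) *: x.
Proof. by apply/matrixP => i j; rewrite !mxE; ring. Qed.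

Lemma Bnorm0 (B : 'M[R]_n) : Bnorm B 0 = 0.
Proof. by have := @BnormZ R n B 0 0; rewrite scale0r normr0 mul0r. Qed.

Lemma lip_scaled (B : 'M[R]_n) (HB : selfadj_posdef B) p (T : nat -> E -> seq 'I_n -> R)
   (Lp : R) (P : set E) :
  (forall y z, P y -> P z -> forall u, Bnorm B u <= 1 ->
     `|Dpow T p y u - Dpow T p z u| <= Lp * Bnorm B (y - z)) ->
  (0 < p)%N -> forall y z u, P y -> P z ->
  `|Dpow T p y u - Dpow T p z u| <= Lp * Bnorm B (y - z) * Bnorm B u ^+ p.
Proof.
move=> Lip p0 y z u Py Pz.
have r0 := @Bnorm_ge0 R n B u.
case: (eqVneq (Bnorm B u) 0) => [/(@Bnorm_eq0 R n B HB u) ->|rn0].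
  by rewrite !Dpow_u0 // subrr normr0 Bnorm0; case: p p0 Lip => // p _ _; rewrite expr0n mulr0.
have rp : 0 < Bnorm B u by rewrite lt_def rn0 r0.
set r := Bnorm B u in rn0 rp r0 *.
set v := r^-1 *: u.
have uv : u = r *: v by rewrite /v scalerA mulfV // scale1r.
have nv : Bnorm B v = 1.
  by rewrite /v BnormZ ger0_norm ?invr_ge0 // mulVf.
have key w : Dpow T p w u = r ^+ p * Dpow T p w v by rewrite {1}uv DpowZ.
rewrite !key -mulrBr normrM ger0_norm ?exprn_ge0 // mulrC.
rewrite ler_pM2r ?exprn_gt0 //; apply: Lip => //.
by rewrite nv.
Qed.

End Lip.

Theorem theorem3 (R : realType) (n : nat) (B : 'M[R]_n) (p : nat) (Lp : R)
  (f : 'rV[R]_n -> R) (h : 'rV[R]_n -> \bar R) (U : set 'rV[R]_n)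
  (T : nat -> 'rV[R]_n -> seq 'I_n -> R)
  (xstar : 'rV[R]_n) (x : nat -> 'rV[R]_n) :
  selfadj_posdef B ->
  (2 <= p)%N ->
  0 < Lp ->
  proper_closed_convex h ->
  open U -> convex_set U -> dom h `<=` U ->
  convex_on U f ->
  deriv_family p U f T ->
  (forall y z, dom h y -> dom h z -> forall u, Bnorm B u <= 1 ->
     `|Dpow T p y u - Dpow T p z u| <= Lp * Bnorm B (y - z)) ->
  let F := fun y => ((f y)%:E + h y)%E in
  (forall y, (F xstar <= F y)%E) ->
  dom h (x 0%N) ->
  (forall k, is_TH B f h T p (p%:R * Lp) (x k) (x k.+1)) ->
  let S := [set Bnorm B (y - xstar) | y in [set y | dom h y /\ (F y <= F (x 0%N))%E]] in
  has_ubound S ->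
  let D := sup S in
  forall k, (2 <= k)%N ->
    (F (x k) <= F xstar +
       ((p.+1%:R * (2 * p%:R) ^+ p / p`!%:R) * (Lp * D ^+ p.+1 / (k.-1%:R) ^+ p))%:E)%E.
Proof.
move=> HB p2 Lp0 [hninf [_ [_ hconv]]] _ _ domU fconv Hf Lip F Fmin dom0 THk S Sub D k k2.
have p1 : (1 <= p)%N by apply: leq_trans p2.
have p0 : (0 < p)%N by [].
pose hr := fun y => fine (h y).
have hfin : forall y, dom h y -> h y = (hr y)%:E.
  move=> y hy; rewrite /hr fineK // fin_numE hninf /=.
  by move: hy; rewrite /dom /= => /lt_eqF ->.
have dom_seg : forall y z (t : R), dom h y -> dom h z -> 0 <= t <= 1 ->
    dom h (t *: y + (1 - t) *: z) /\
    hr (t *: y + (1 - t) *: z) <= t * hr y + (1 - t) * hr z.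
  move=> y z t hy hz t01.
  have := hconv y z t t01; rewrite (hfin y hy) (hfin z hz) -!EFinM -EFinD => H.
  have hw : dom h (t *: y + (1 - t) *: z).
    by rewrite /dom /=; apply: le_lt_trans H (ltry _).
  by split => //; move: H; rewrite (hfin _ hw) lee_fin.
have seg_dom : forall y z (t : R), dom h y -> dom h z -> 0 <= t <= 1 ->
    dom h (y + t *: (z - y)).
  by move=> y z t hy hz t01; rewrite seg_eq; case: (dom_seg z y t hz hy t01).
have tay : forall a b, dom h a -> dom h b ->
    `|f b - Omega f T p a b| <= Lp * Bnorm B (b - a) ^+ p.+1 / p.+1`!%:R.
  move=> a b ha hb; apply: (@taylor_f R n p U f T a b _ Hf).
    by move=> t t01; apply: domU; apply: seg_dom.
  move=> t t01.
  have := @lip_scaled R n B HB p T Lp (dom h) Lip p0 _ _ (b - a) (seg_dom a b t ha hb t01) ha.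
  move=> L; apply: le_trans L _.
  rewrite addrC addKr BnormZ ger0_norm; last by case/andP: t01.
  by rewrite exprS le_eqVlt; apply/orP; left; apply/eqP; ring.
have Bn0 : Bnorm B 0 = 0 by exact: Bnorm0.
have Om0 : forall a, Omega f T p a a = f a.
  move=> a; rewrite /Omega subrr big_nat_cond big1 ?addr0 // => i.
  by case/andP => /andP[i1 _] _; rewrite Dpow_u0 // mulr0.
have step : forall j, dom h (x j) -> dom h (x j.+1) /\
    forall z, dom h z -> f (x j.+1) + hr (x j.+1) <=
       f z + hr z + Lp / p`!%:R * Bnorm B (z - x j) ^+ p.+1.
  move=> j dj.
  have TH := THk j.
  have dy : dom h (x j.+1).
    move: (TH (x j)); rewrite (hfin _ dj) -EFinD subrr Bn0 Om0.
    rewrite /dom /=; case: (h (x j.+1)) (hninf (x j.+1)) => [r| |] //= _ _.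
    exact: ltry.
  split => // z dz.
  move: (TH z); rewrite (hfin _ dz) (hfin _ dy) -!EFinD lee_fin => Hm.
  have t1 := tay _ _ dj dy.
  have t2 := tay _ _ dj dz.
  move: t1 t2; rewrite !ler_norml => /andP[_ t1] /andP[t2 _].
  set c := (p.+1)`!%:R in Hm t1 t2 *.
  have c0 : 0 < c by rewrite ltr0n fact_gt0.
  set Ry := Bnorm B (x j.+1 - x j) ^+ p.+1 in Hm t1 *.
  set Rz := Bnorm B (z - x j) ^+ p.+1 in Hm t2 *.
  have Ry0 : 0 <= Ry by apply: exprn_ge0; apply: Bnorm_ge0.
  have Rz0 : 0 <= Rz by apply: exprn_ge0; apply: Bnorm_ge0.
  set K1 := Lp / c.
  set K2 := p%:R * Lp / c.
  have e1 : Lp * Ry / c = K1 * Ry by rewrite /K1 mulrAC.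
  have e2 : Lp * Rz / c = K1 * Rz by rewrite /K1 mulrAC.
  have K12 : K1 <= K2.
    rewrite /K1 /K2 ler_pM2r ?invr_gt0 //.
    have : 1 <= p%:R :> R by rewrite ler1n.
    nra.
  have K12y : K1 * Ry <= K2 * Ry by apply: ler_wpM2r.
  have fac : Lp / p`!%:R = K2 + K1.
    rewrite /K1 /K2 /c factS natrM; field.
    by rewrite pnatr_eq0 -lt0n fact_gt0 /= addrC natr1 pnatr_eq0.
  rewrite fac mulrDl.
  rewrite -/K2 in Hm.
  rewrite e1 in t1; rewrite e2 in t2.
  lra.
have domx : forall j, dom h (x j).
  by elim => // j IH; case: (step j IH).
pose Fr := fun y => f y + hr y.
have Fdec : forall j, Fr (x j.+1) <= Fr (x j).
  move=> j; have [_ H] := step j (domx j).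
  have := H (x j) (domx j); rewrite subrr Bn0 expr0n /= mulr0 addr0.
  by [].
have Fle0 : forall j, Fr (x j) <= Fr (x 0%N).
  by elim => // j IH; apply: le_trans (Fdec j) IH.
have Fe : forall y, dom h y -> F y = (Fr y)%:E.
  by move=> y hy; rewrite /F (hfin y hy) -EFinD.
have dxs : dom h xstar.
  have := Fmin (x 0%N); rewrite (Fe _ dom0) /F /dom /=.
  case: (h xstar) (hninf xstar) => [r| |] //= _ _.
  exact: ltry.
have inS : forall j, S (Bnorm B (x j - xstar)).
  move=> j; exists (x j) => //; split; first exact: domx.
  by rewrite !Fe // lee_fin.
have Dj : forall j, Bnorm B (x j - xstar) <= D.
  by move=> j; apply: (ub_le_sup Sub); apply: inS.
have D0 : 0 <= D by apply: le_trans (@Bnorm_ge0 R n B (x 0%N - xstar)) (Dj 0%N).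
pose C := Lp / p`!%:R * D ^+ p.+1.
have C0 : 0 <= C.
  by rewrite /C mulr_ge0 ?exprn_ge0 // divr_ge0 // ltW.
pose d := fun j => Fr (x j) - Fr xstar.
have rec : forall j (t : R), 0 <= t <= 1 -> d j.+1 <= (1 - t) * d j + C * t ^+ p.+1.
  move=> j t t01.
  have [dz hz] := dom_seg xstar (x j) t dxs (domx j) t01.
  have [_ H] := step j (domx j).
  have := H _ dz.
  have fz : f (t *: xstar + (1 - t) *: x j) <= t * f xstar + (1 - t) * f (x j).
    by apply: fconv => //; apply: domU; [apply: dxs | apply: domx].
  have nz : Bnorm B (t *: xstar + (1 - t) *: x j - x j) ^+ p.+1 <= t ^+ p.+1 * D ^+ p.+1.
    have -> : t *: xstar + (1 - t) *: x j - x j = (- t) *: (x j - xstar).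
      by apply/matrixP => a b; rewrite !mxE; ring.
    rewrite BnormZ normrN ger0_norm; last by case/andP: t01.
    rewrite -exprMn; apply: powle.
      by apply: mulr_ge0; [case/andP: t01 | apply: Bnorm_ge0].
    by apply: ler_wpM2l; [case/andP: t01 | apply: Dj].
  have LpP : 0 <= Lp / p`!%:R by rewrite divr_ge0 // ltW.
  have nz2 := ler_wpM2l LpP nz.
  rewrite /d /Fr /C => Hz.
  have : Lp / p`!%:R * (t ^+ p.+1 * D ^+ p.+1) = Lp / p`!%:R * D ^+ p.+1 * t ^+ p.+1.
    by ring.
  lra.
have km : k = k.-1.+1 by case: k k2.
have m1 : (1 <= k.-1)%N by case: k k2 km => [|[|k]].
have := @seq_rate R p C d p1 C0 rec _ m1.
rewrite -km /d => Hk.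
rewrite (Fe _ (domx k)) (Fe _ dxs) -EFinD lee_fin.
have -> : p.+1%:R * (2 * p%:R) ^+ p / p`!%:R * (Lp * D ^+ p.+1 / k.-1%:R ^+ p)
   = p.+1%:R * (2 * p%:R) ^+ p / k.-1%:R ^+ p * C by rewrite /C; ring.
lra.
Qed.
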